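(* Every pairwise linked lobster is graceful.
   Context: A graph $G=(V,E)$ with $m$ edges is graceful if there is an injective $f:V\to\{0,\ldots,m\}$ (a graceful labeling) with the edge labels $|f(u)-f(v)|$, $uv\in E$, pairwise distinct. A lobster is a tree whose base (the tree obtained by deleting all degree-one vertices) is a caterpillar, a caterpillar being a tree whose base is a path. A lobster $L$ is described by a spine, a path $(v_1,\ldots,v_r)$, together with, for each $i$, a tree $F_i$ (the lobe at $v_i$), the lobes pairwise vertex-disjoint and each meeting the spine only in $v_i$, with $L$ the union of the spine and the lobes; each lobe $F_i$ consists of $v_i$, vertices $u_{i1},\ldots,u_{is_i}$ ($s_i\ge 0$) adjacent to $v_i$, and for each $j$ some $k_{ij}\ge0$ further vertices adjacent only to $u_{ij}$. If $k_{ij}=0$, $u_{ij}$ is a pendant vertex at $v_i$; the reduced lobe $F'_i$ is $F_i$ with all pendant vertices at $v_i$ deleted. For two vertex-disjoint graceful graphs $G_1,G_2$ with given graceful labelings, $G_1\circ G_2$ denotes the graph obtained by identifying the maximum-labeled vertex of $G_1$ with the maximum-labeled vertex of $G_2$. $L$ is pairwise linked if there are trees $G_1,\ldots,G_r$ of diameter $4$, each with a graceful labeling in which its central vertex has the maximum label, such that $F'_i\cong G_i\circ G_{i+1}$ for each $i=1,\ldots,r-1$ and $F'_r\cong G_r$. *)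

(* Defs.v *)
From mathcomp Require Import all_boot.
Unset Printing Implicit Defensive.

Record graph := Graph { vtx : finType; adj : rel vtx }.
Arguments adj {g}.

Definition simple (G : graph) : Prop :=
  irreflexive (@adj G) /\ symmetric (@adj G).

(** Number of edges (each unordered edge counted by its two orientations). *)
Definition nedges (G : graph) : nat :=
  #|[set p : vtx G * vtx G | adj p.1 p.2]| %/ 2.

Definition absdiff (a b : nat) : nat := (a - b) + (b - a).

Definition graceful_labeling (G : graph) (f : vtx G -> nat) : Prop :=
  injective f /\ (forall v, f v <= nedges G) /\
  (forall x y x' y', adj x y -> adj x' y' ->
     absdiff (f x) (f y) = absdiff (f x') (f y') ->
     (x = x' /\ y = y') \/ (x = y' /\ y = x')).

Definition graceful (G : graph) : Prop := exists f, graceful_labeling G f.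

Definition connected (G : graph) : Prop :=
  forall x y : vtx G, connect (@adj G) x y.

Definition tree (G : graph) : Prop :=
  simple G /\ 0 < #|vtx G| /\ connected G /\ nedges G = #|vtx G| - 1.

Definition walk_le (G : graph) (n : nat) (x y : vtx G) : Prop :=
  exists p : seq (vtx G), size p <= n /\ path (@adj G) x p /\ last x p = y.

Definition diameter4 (G : graph) : Prop :=
  (forall x y, walk_le G 4 x y) /\ exists x y, ~ walk_le G 3 x y.

Definition central (G : graph) (c : vtx G) : Prop := forall v, walk_le G 2 c v.

Definition induced (G : graph) (S : {set vtx G}) : graph :=
  @Graph {x : vtx G | x \in S}
         (fun x y => @adj G (val x) (val y)).

Definition isomorphic (G1 G2 : graph) : Prop :=
  exists h : vtx G1 -> vtx G2, bijective h /\
    forall x y, @adj G1 x y = @adj G2 (h x) (h y).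

(** Gluing G1 and G2 by identifying c1 in G1 with c2 in G2. *)
Section Glue.
Variables (G1 G2 : graph) (c1 : vtx G1) (c2 : vtx G2).
Definition glue_phi (x : vtx G1 + vtx G2) : vtx G1 + vtx G2 :=
  match x with inr b => if b == c2 then inl c1 else x | _ => x end.
Definition sum_adj (a b : vtx G1 + vtx G2) : bool :=
  match a, b with
  | inl a, inl b => @adj G1 a b
  | inr a, inr b => @adj G2 a b
  | _, _ => false end.
Definition glue_vtx : finType :=
  {x : vtx G1 + vtx G2 | glue_phi x == x}.
Definition glue : graph :=
  @Graph glue_vtx (fun x y : glue_vtx =>
    [exists a, exists b,
       [&& glue_phi a == val x, glue_phi b == val y & sum_adj a b]]).
End Glue.

(** G1 ∘ G2 w.r.t. graceful labelings f1, f2: identify the maximum-labeled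
    vertices; here m1, m2 are required to be those vertices. *)
Definition is_max_label (G : graph) (f : vtx G -> nat) (m : vtx G) : Prop :=
  forall v, f v <= f m.

(** Lobster via base (deletion of degree-one vertices), on vertex subsets. *)
Section Lobster.
Variable G : graph.
Definition deg_in (S : {set vtx G}) (x : vtx G) : nat :=
  #|[set y in S | adj x y]|.
Definition base (S : {set vtx G}) : {set vtx G} :=
  [set x in S | deg_in S x != 1].
(** path graph (the empty graph is allowed as a degenerate path) *)
Definition path_on (S : {set vtx G}) : Prop :=
  S = set0 \/ (tree (induced G S) /\ forall x, x \in S -> deg_in S x <= 2).
Definition caterpillar_on (S : {set vtx G}) : Prop :=
  S = set0 \/ (tree (induced G S) /\ path_on (base S)).
End Lobster.

Definition lobster (L : graph) : Prop :=
  tree L /\ caterpillar_on L (base L [set: vtx L]).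

(** Pairwise linked lobster.  Spine v_0..v_{r-1} is [s 0 .. s (r-1)];
    [lobe x] is the index i of the lobe F_i containing x. *)
Definition pairwise_linked (L : graph) : Prop :=
  exists (r : nat) (s : nat -> vtx L) (lobe : vtx L -> nat)
         (G : nat -> graph) (f : forall i, vtx (G i) -> nat)
         (c : forall i, vtx (G i)),
  0 < r /\
      (forall i j, i < r -> j < r -> s i = s j -> i = j) /\
      (forall i, i.+1 < r -> adj (s i) (s i.+1)) /\
      (* lobes partition V, F_i meets the spine only in v_i *)
      (forall x, lobe x < r) /\ (forall i, i < r -> lobe (s i) = i) /\
      (* L is the union of the spine and the lobes *)
      (forall x y, adj x y -> lobe x = lobe y \/
         exists i, i.+1 < r /\ ((x = s i /\ y = s i.+1) \/ (x = s i.+1 /\ y = s i))) /\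
      (* shape of a lobe: v_i, the u_ij adjacent to v_i, and further
         vertices adjacent (within F_i) only to their u_ij *)
      (forall x, let i := lobe x in
         x = s i \/ adj (s i) x \/
         exists u, [/\ lobe u = i, adj (s i) u, adj u x &
                      forall y, lobe y = i -> adj x y -> y = u]) /\
      (forall i, i < r ->
         [/\ tree (G i), diameter4 (G i), graceful_labeling (G i) (f i),
             central (G i) (c i) & is_max_label (G i) (f i) (c i)]) /\
      let Fred i := [set x | (lobe x == i) &&
                      ~~ (adj (s i) x &&
                          [forall y, ((lobe y == i) && adj x y) ==> (y == s i)])] in
      (forall i, i.+1 < r ->
         isomorphic (induced L (Fred i)) (glue (G i) (G i.+1) (c i) (c i.+1))) /\
      isomorphic (induced L (Fred r.-1)) (G r.-1).

(* Main.v *)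
Require Import Defs.
From mathcomp Require Import all_boot zify.
From Stdlib Require Import IndefiniteDescription.

Set Implicit Arguments. Unset Strict Implicit. Unset Printing Implicit Defensive.

Lemma walk2_cases (G : graph) (x y : vtx G) :
  walk_le G 2 x y -> x = y \/ adj x y \/ exists t, adj x t /\ adj t y.
Proof.
case=> [[|a [|b [|d p]]]] [/= Hs [Hp Hl]].
- by left.
- by right; left; rewrite -Hl; case/andP: Hp.
- by right; right; exists a; case/and3P: Hp => H1 H2 _; rewrite -Hl.
- by [].
Qed.

Lemma walk_cat (G : graph) n1 n2 (x y z : vtx G) :
  walk_le G n1 x y -> walk_le G n2 y z -> walk_le G (n1 + n2) x z.
Proof.
move=> [p [sp [pp lp]]] [q [sq [pq lq]]]; exists (p ++ q); split.
  by rewrite size_cat; apply: leq_add.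
by rewrite cat_path last_cat lp pp pq.
Qed.

Lemma walk_catn (G : graph) n1 n2 n (x y z : vtx G) : n1 + n2 <= n ->
  walk_le G n1 x y -> walk_le G n2 y z -> walk_le G n x z.
Proof.
move=> H [p [sp [pp lp]]] [q [sq [pq lq]]]; exists (p ++ q); split.
  by rewrite size_cat; apply: leq_trans H; apply: leq_add.
by rewrite cat_path last_cat lp pp pq.
Qed.

Lemma walk0 (G : graph) (x : vtx G) : walk_le G 0 x x.
Proof. by exists [::]. Qed.

Lemma walk1 (G : graph) (x y : vtx G) : adj x y -> walk_le G 1 x y.
Proof. by move=> xy; exists [:: y]; rewrite /= xy. Qed.

Lemma walk_mono (G : graph) n n' (x y : vtx G) : n <= n' -> walk_le G n x y -> walk_le G n' x y.
Proof. by move=> nn [p [sp H]]; exists p; split=> //; apply: leq_trans nn. Qed.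

Definition within2 (G : graph) (z w : vtx G) :=
  z = w \/ adj z w \/ exists t, adj z t /\ adj t w.
Arguments within2 {G}.

Section TreeStruct.
Variable G : graph.
Variable c : vtx G.
Hypothesis HT : tree G.
Hypothesis Hc : central G c.

Local Notation V := (vtx G).
Let irr : irreflexive (@adj G). Proof. by case: HT => [[]]. Qed.
Let sym : symmetric (@adj G). Proof. by case: HT => [[]]. Qed.

Definition par (a : V) : V :=
  if adj c a then c else odflt c [pick t | adj c t && adj t a].

Lemma par_spec a : a != c -> adj a (par a) /\ (adj c a -> par a = c) /\
   (~~ adj c a -> adj c (par a)).
Proof.
move=> ac; rewrite /par.
case: ifP => ca.
  by split=> //; rewrite sym.
case: pickP => [t /andP [ct ta] | none].
  by rewrite /= sym ta ct.
exfalso. case: (walk2_cases (Hc a)) => [E|[E|[t [H1 H2]]]].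
- by rewrite E eqxx in ac.
- by rewrite E in ca.
- by have := none t; rewrite H1 H2.
Qed.

Definition S : {set V * V} := [set q | adj q.1 q.2].
Definition T1s : {set V * V} := [set (a, par a) | a in [set a | a != c]].
Definition T2s : {set V * V} := [set (par a, a) | a in [set a | a != c]].

Lemma cardV1 : #|[set a : V | a != c]| = #|V| - 1.
Proof.
have -> : [set a : V | a != c] = [set~ c] by apply/setP=> x; rewrite !inE.
by rewrite cardsC1; lia.
Qed.

Lemma par_lvl a : a != c -> par a != c -> adj c (par a) /\ ~~ adj c a.
Proof.
move=> ac pc; have [H1 [H2 H3]] := par_spec ac.
case E: (adj c a).
  by rewrite H2 ?eqxx in pc.
by split=> //; apply: H3; rewrite E.
Qed.

Lemma all_edges_par x y : adj x y ->
  (x != c /\ y = par x) \/ (y != c /\ x = par y).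
Proof.
move=> xy.
have cardT1 : #|T1s| = #|V| - 1.
  by rewrite card_imset ?cardV1 // => a b [].
have cardT2 : #|T2s| = #|V| - 1.
  rewrite card_imset ?cardV1 // => a b [] E1 E2 //.
have disj : [disjoint T1s & T2s].
  apply/pred0P=> q /=; apply/negbTE/negP=> /andP [/imsetP [a Ha ->]
     /imsetP [b Hb [E1 E2]]].
  move: Ha Hb; rewrite !inE => Ha Hb.
  case: (eqVneq (par a) c) => pa.
    by rewrite -E2 pa eqxx in Hb.
  have [Q1 N1] := par_lvl Ha pa.
  have pb : par b != c by move: Ha; rewrite E1.
  have [Q2 N2] := par_lvl Hb pb.
  by move: N2; rewrite -E2 Q1.
have sub : T1s :|: T2s \subset S.
  apply/subsetP=> q; rewrite inE => /orP [] /imsetP [a Ha ->];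
  move: Ha; rewrite !inE /= => Ha; have [H _] := par_spec Ha => //.
  by rewrite sym.
have cardU : #|T1s :|: T2s| = 2 * (#|V| - 1).
  by rewrite cardsU disjoint_setI0 // cards0 cardT1 cardT2; lia.
have [_ [V0 [_ HE]]] := HT.
rewrite /nedges in HE.
have SD : S \subset T1s :|: T2s.
  apply/subsetPn=> [[[u v] qS qT]].
  have q'S : (v, u) \in S by move: qS; rewrite !inE /= sym.
  have q'T : (v, u) \notin T1s :|: T2s.
    apply/negP=> H; move/negP: qT; apply.
    move: H; rewrite !inE => /orP [] /imsetP [a Ha [E1 E2]]; apply/orP.
    - by right; apply/imsetP; exists a => //; rewrite E1 E2.
    - by left; apply/imsetP; exists a => //; rewrite E1 E2.
  have neq : (u, v) != (v, u).
    move: qS; rewrite inE /= => uv.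
    apply/negP=> /eqP [E _]; by rewrite E irr in uv.
  have : #|[set (u, v); (v, u)]| <= #|S :\: (T1s :|: T2s)|.
    apply: subset_leq_card; apply/subsetP=> z; rewrite !inE.
    case/orP=> /eqP ->; apply/andP; split => //.
    - by apply/negP=> H; move/negP: qT; apply; rewrite inE.
    - by move: qS; rewrite inE.
    - by apply/negP=> H; move/negP: q'T; apply; rewrite inE.
    - by move: q'S; rewrite inE.
  rewrite cards2 neq cardsD.
  have -> : S :&: (T1s :|: T2s) = T1s :|: T2s.
    by apply/setIidPr.
  rewrite cardU /= => H.
  have HE' : #|S| %/ 2 = #|V| - 1 := HE.
  have V0' : 0 < #|V| := V0.
  move: HE' V0' H; clear. move: (#|S|) (#|V|) => a b. lia.
have : (x, y) \in T1s :|: T2s by apply: (subsetP SD); rewrite inE.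
rewrite !inE => /orP [] /imsetP [a Ha [E1 E2]]; move: Ha; rewrite inE => Ha.
- by left; rewrite E1 E2.
- by right; rewrite E1 E2.
Qed.

Lemma noQQ a b : adj a b -> adj c a -> adj c b -> False.
Proof.
move=> ab ca cb.
have ac : a != c by apply/eqP=> E; rewrite E irr in ca.
have bc : b != c by apply/eqP=> E; rewrite E irr in cb.
have [[_ E]|[_ E]] := all_edges_par ab.
- by have [_ [H _]] := par_spec ac; move: bc; rewrite E H // eqxx.
- by have [_ [H _]] := par_spec bc; move: ac; rewrite E H // eqxx.
Qed.

Lemma cross a b : adj a b -> adj c a != adj c b.
Proof.
move=> ab; case Ea: (adj c a); case Eb: (adj c b) => //.
- by exfalso; apply: (noQQ ab).
- case: (eqVneq a c) => [E|ac]; first by rewrite -E ab in Eb.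
  case: (eqVneq b c) => [E|bc]; first by rewrite -E sym ab in Ea.
  have [[_ E]|[_ E]] := all_edges_par ab.
  + by have [_ [_ H]] := par_spec ac; move: Eb; rewrite E H // Ea.
  + by have [_ [_ H]] := par_spec bc; move: Ea; rewrite E H // Eb.
Qed.

Lemma lvl2_nbr w t : w != c -> ~~ adj c w -> adj w t -> t = par w.
Proof.
move=> wc nw wt.
have [[_ E]|[tc E]] := all_edges_par wt => //.
have [_ [H1 H2]] := par_spec tc.
case E2: (adj c t).
  by move: wc; rewrite E H1 // eqxx.
by move: nw; rewrite E H2 // E2.
Qed.

Lemma walk2_from_c a : a = c \/ adj c a \/ (a != c /\ ~~ adj c a /\ adj c (par a)).
Proof.
case: (eqVneq a c) => [->|ac]; first by left.
case E: (adj c a); first by right; left.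
right; right; split=> //; split=> //.
by have [_ [_ H]] := par_spec ac; apply: H; rewrite E.
Qed.


Lemma par_Q w : w != c -> ~~ adj c w -> adj c (par w).
Proof. by move=> wc nw; have [_ [_ H]] := par_spec wc; apply: H. Qed.

Lemma w2_of_walk (x y : V) : walk_le G 2 x y -> within2 x y.
Proof. by move/walk2_cases. Qed.

Lemma walk_of_w2 (x y : V) : within2 x y -> walk_le G 2 x y.
Proof.
case=> [->|[xy|[t [xt ty]]]]; first by apply: (walk_mono (n:=0)) => //; apply: walk0.
  by apply: (walk_mono (n:=1)) => //; apply: walk1.
by apply: (walk_catn (n1:=1) (n2:=1) (y:=t)) => //; apply: walk1.
Qed.

Lemma w2_sym (x y : V) : within2 x y -> within2 y x.
Proof.
case=> [->|[xy|[t [xt ty]]]]; first by left.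
  by right; left; rewrite sym.
by right; right; exists t; split; rewrite sym.
Qed.

Lemma far_pair : diameter4 G -> exists x y,
  [/\ x != c, ~~ adj c x, y != c, ~~ adj c y & par x != par y] /\ x != y.
Proof.
case=> _ [x [y nw]].
have wc : forall u, walk_le G 2 c u := Hc.
have cw : forall u, walk_le G 2 u c by move=> u; apply: walk_of_w2; apply: w2_sym; apply: w2_of_walk.
have lx : x != c /\ ~~ adj c x.
  case: (eqVneq x c) => [E|xc].
    by exfalso; apply: nw; subst x; apply: (walk_mono (n:=2)).
  case E: (adj c x); last by split.
  by exfalso; apply: nw; apply: (walk_catn (n1:=1) (n2:=2) (y:=c)) => //; try (apply: walk1; rewrite sym); try apply: wc.
have ly : y != c /\ ~~ adj c y.
  case: (eqVneq y c) => [E|yc].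
    by subst y; exfalso; apply: nw; apply: (walk_mono (n:=2)).
  case E: (adj c y); last by split.
  by exfalso; apply: nw; apply: (walk_catn (n1:=2) (n2:=1) (y:=c)) => //; try apply: cw; try apply: walk1.
case: lx ly => [xc nx] [yc ny].
exists x, y; split; last by apply/negP=> /eqP E; subst y; apply: nw; apply: (walk_mono (n:=0)) => //; apply: walk0.
split=> //; apply/negP=> /eqP E.
have [px _] := par_spec xc; have [py _] := par_spec yc.
apply: nw; apply: (walk_catn (n1:=1) (n2:=1) (y:=par x)) => //; apply: walk1; first by exact: px.
by rewrite E sym.
Qed.

Lemma tree_center (z : V) : diameter4 G -> (forall w, within2 z w) -> z = c.
Proof.
move=> D Hz; have [x [y [[xc nx yc ny pxy] xy]]] := far_pair D.
case: (eqVneq z c) => [//|zc]; exfalso.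
have Qx := par_Q xc nx; have Qy := par_Q yc ny.
case cz: (adj c z).
  have key : forall w, w != c -> ~~ adj c w -> z = par w.
    move=> w wc nw; case: (Hz w) => [E|[E|[t [zt tw]]]].
    - by rewrite -E cz in nw.
    - by apply: lvl2_nbr => //; rewrite sym.
    - have et : t = par w by apply: lvl2_nbr => //; rewrite sym.
      by exfalso; apply: (noQQ zt) => //; rewrite et; apply: par_Q.
  by move: pxy; rewrite -(key x xc nx) -(key y yc ny) eqxx.
have nz : ~~ adj c z by rewrite cz.
have key : forall w, w != c -> ~~ adj c w -> z = w \/ par z = par w.
  move=> w wc nw; case: (Hz w) => [E|[E|[t [zt tw]]]]; first by left.
  - by exfalso; move: nw; rewrite (lvl2_nbr zc nz E) par_Q.
  - by right; rewrite -(lvl2_nbr zc nz zt); apply: lvl2_nbr => //; rewrite sym.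
case: (key x xc nx) => [ex|ex]; case: (key y yc ny) => [ey|ey].
- by move: xy; rewrite -ex -ey eqxx.
- by move: pxy; rewrite -ex ey eqxx.
- by move: pxy; rewrite -ey ex eqxx.
- by move: pxy; rewrite -ex ey eqxx.
Qed.

Lemma lvl2_exists : diameter4 G -> exists w, w != c /\ ~~ adj c w.
Proof. by move=> D; have [x [y [[xc nx _ _ _] _]]] := far_pair D; exists x. Qed.


End TreeStruct.

Lemma grace_facts (G : graph) (f : vtx G -> nat) (c : vtx G) :
  tree G -> graceful_labeling G f -> is_max_label G f c ->
  [/\ f c = nedges G, #|vtx G| = (nedges G).+1 &
      forall n, n <= nedges G -> exists a, f a = n].
Proof.
move=> [_ [V0 [_ HE]]] [fi [fle _]] fmax.
have cV : #|vtx G| = (nedges G).+1 by rewrite HE; move: V0; move: (#|vtx G|) => n; lia.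
have U : uniq (map f (enum (vtx G))) by rewrite map_inj_uniq ?enum_uniq.
have sub : {subset map f (enum (vtx G)) <= iota 0 (nedges G).+1}.
  by move=> z /mapP [x _ ->]; rewrite mem_iota add0n ltnS fle.
have sz : size (iota 0 (nedges G).+1) <= size (map f (enum (vtx G))).
  by rewrite size_map -cardE size_iota cV.
have [_ eqs] := uniq_min_size U sub sz.
have surj : forall n, n <= nedges G -> exists a, f a = n.
  move=> n nm; have : n \in iota 0 (nedges G).+1 by rewrite mem_iota add0n ltnS.
  by rewrite -eqs => /mapP [a _ ->]; exists a.
split=> //.
have [a fa] := surj (nedges G) (leqnn _).
by apply/eqP; rewrite eqn_leq fle /= -fa fmax.
Qed.


Unset Implicit Arguments.
Unset Printing Implicit Defensive.

Section GlueLemmas.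
Variables (G1 G2 : graph) (c1 : vtx G1) (c2 : vtx G2).
Hypothesis irr1 : irreflexive (@adj G1).
Hypothesis irr2 : irreflexive (@adj G2).
Local Notation phi := (glue_phi G1 G2 c1 c2).
Local Notation GV := (vtx (glue G1 G2 c1 c2)).

Lemma phi_idem x : phi (phi x) = phi x.
Proof. case: x => [a|b] //=; case: (eqVneq b c2) => [E|nb] //=; by rewrite (negbTE nb). Qed.

Definition gin (x : vtx G1 + vtx G2) : GV :=
  exist _ (phi x) (introT eqP (phi_idem x)).

Lemma gin_val (u : GV) : gin (val u) = u.
Proof. by apply: val_inj => /=; case: u => x /= /eqP. Qed.

Lemma val_gin x : val (gin x) = phi x.
Proof. by []. Qed.

Lemma gin_inr_c : gin (inr c2) = gin (inl c1).
Proof. by apply: val_inj => /=; rewrite eqxx. Qed.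

Lemma phi_inr b : b != c2 -> phi (inr b) = inr b.
Proof. by move=> /negbTE /= ->. Qed.

Lemma adj_glue (u v : GV) : adj u v =
  [exists a, exists b, [&& phi a == val u, phi b == val v & sum_adj G1 G2 a b]].
Proof. by []. Qed.

Lemma phi_eq_inv a' x : phi a' = phi x ->
  a' = x \/ (phi x = inl c1 /\ (a' = inl c1 \/ a' = inr c2)).
Proof.
case: a' => [u|u]; case: x => [v|v] /=.
- by move=> [->]; left.
- case: eqP => [ev|nv] E; last by [].
  by subst v; move: E => [->]; right; split=> //; left.
- case: eqP => [eu|nu] E; last by [].
  by subst u; move: E => [<-]; right; split=> //; right.
- case: eqP => [eu|nu]; case: eqP => [ev|nv] E //.
  all: try by subst; left.
  all: try by subst; right; split=> //; right.
  all: by move: E => [->]; left.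
Qed.
Arguments phi_eq_inv {a' x}.

Lemma adj_gin (x y : vtx G1 + vtx G2) : adj (gin x) (gin y) =
  [exists a, exists b, [&& phi a == phi x, phi b == phi y & sum_adj G1 G2 a b]].
Proof. by []. Qed.

Lemma adj_gin_inl a b : adj (gin (inl a)) (gin (inl b)) = adj a b.
Proof.
rewrite adj_gin; apply/existsP/idP => [[a' /existsP [b' /and3P [/eqP Ea /eqP Eb ab]]]|ab].
  case: (phi_eq_inv Ea) => [Ea'|[Ea1 [Ea'|Ea']]];
  case: (phi_eq_inv Eb) => [Eb'|[Eb1 [Eb'|Eb']]]; subst => //=.
  all: try (move: Ea1 => /= [E1]); try (move: Eb1 => /= [E2]); subst.
  all: try (by []); try (by move: ab => /=; rewrite ?irr1 ?irr2).
by exists (inl a); apply/existsP; exists (inl b); rewrite !eqxx.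
Qed.

Lemma phi_inr_c a : phi (inr a) = inl c1 -> a = c2.
Proof. by rewrite /=; case: eqP. Qed.

Lemma adj_gin_inr a b : adj (gin (inr a)) (gin (inr b)) = adj a b.
Proof.
rewrite adj_gin; apply/existsP/idP => [[a' /existsP [b' /and3P [/eqP Ea /eqP Eb ab]]]|ab].
  case: (phi_eq_inv Ea) => [Ea'|[Ea1 [Ea'|Ea']]];
  case: (phi_eq_inv Eb) => [Eb'|[Eb1 [Eb'|Eb']]]; subst => //=.
  all: try (move/phi_inr_c: Ea1 => Ea1); try (move/phi_inr_c: Eb1 => Eb1); subst.
  all: try (by []); try (by move: ab => /=; rewrite ?irr1 ?irr2).
by exists (inr a); apply/existsP; exists (inr b); rewrite !eqxx.
Qed.

Lemma gin_phi x : gin (phi x) = gin x.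
Proof. by apply: val_inj; rewrite /= phi_idem. Qed.

Lemma gin_eq x y : gin x = gin y -> phi x = phi y.
Proof. by move/(congr1 val). Qed.
Arguments gin_eq {x y}.

Lemma glue_edge (u v : GV) : adj u v ->
  (exists a b, [/\ u = gin (inl a), v = gin (inl b) & adj a b]) \/
  (exists a b, [/\ u = gin (inr a), v = gin (inr b) & adj a b]).
Proof.
rewrite adj_glue => /existsP [a' /existsP [b' /and3P [/eqP Ea /eqP Eb ab]]].
have Eu : u = gin a' by rewrite -(gin_val u) -Ea gin_phi.
have Ev : v = gin b' by rewrite -(gin_val v) -Eb gin_phi.
case: a' Ea ab Eu => [a'|a'] _; case: b' Eb Ev => [b'|b'] _ //= Ev ab Eu.
- by left; exists a', b'.
- by right; exists a', b'.
Qed.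
Arguments glue_edge {u v}.


Lemma glue_center (z : GV) :
  (exists w1 : vtx G1, w1 != c1 /\ ~~ adj c1 w1) ->
  (exists w2 : vtx G2, w2 != c2 /\ ~~ adj c2 w2) ->
  (forall w, within2 z w) -> z = gin (inl c1).
Proof.
move=> [w1 [w1c nw1]] [w2 [w2c nw2]] Hz.
have vz := gin_val z.
case Ez: (val z) vz => [a|b] vz.
- case: (eqVneq a c1) => [ea|na]; first by rewrite -vz ea.
  exfalso.
  have ph2 : phi (inr w2) = inr w2 by apply: phi_inr.
  case: (Hz (gin (inr w2))) => [E|[E|[t [zt tw]]]].
  + by move: (congr1 val E); rewrite Ez val_gin ph2.
  + case: (glue_edge E) => [[a1 [b1 [E1 E2 _]]]|[a1 [b1 [E1 E2 _]]]].
    * by move: (gin_eq E2); rewrite ph2.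
    * move: E1; rewrite -vz => /gin_eq /= => E3.
      by move: E3; case: eqP => // _ [E4]; rewrite E4 eqxx in na.
  + case: (glue_edge tw) => [[a1 [b1 [E1 E2 _]]]|[t1 [b1 [E1 E2 t1b]]]].
      by move: (gin_eq E2); rewrite ph2.
    move: (gin_eq E2); rewrite ph2 /=; case: eqP => // nb1 [eb]; subst b1.
    case: (glue_edge zt) => [[a2 [b2 [E3 E4 _]]]|[a2 [b2 [E3 E4 _]]]].
    * move: E4; rewrite E1 => /gin_eq /=; case: eqP => // et1 _; subst t1.
      by rewrite t1b in nw2.
    * move: E3; rewrite -vz => /gin_eq /=; case: eqP => // _ [E5].
      by rewrite E5 eqxx in na.
- exfalso.
  have bc : b != c2 by apply/negP=> /eqP eb; move/eqP: (valP z); rewrite Ez /= eb eqxx.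
  case: (Hz (gin (inl w1))) => [E|[E|[t [zt tw]]]].
  + by move: (congr1 val E); rewrite Ez.
  + case: (glue_edge E) => [[a1 [b1 [E1 E2 _]]]|[a1 [b1 [E1 E2 _]]]].
    * by move: E1; rewrite -vz => /gin_eq /=; rewrite (negbTE bc).
    * move: (gin_eq E2) => /=; case: eqP => // _ [E3].
      by rewrite E3 eqxx in w1c.
  + case: (glue_edge tw) => [[t1 [b1 [E1 E2 t1b]]]|[t1 [b1 [E1 E2 _]]]].
    * move: (gin_eq E2) => /= [eb]; subst b1.
      case: (glue_edge zt) => [[a2 [b2 [E3 E4 _]]]|[a2 [b2 [E3 E4 _]]]].
      - by move: E3; rewrite -vz => /gin_eq /=; rewrite (negbTE bc).
      - move: E4; rewrite E1 => /gin_eq /=; case: eqP => // _ [E5].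
        by rewrite -E5 t1b in nw1.
    * move: (gin_eq E2) => /=; case: eqP => // _ [E3].
      by rewrite E3 eqxx in w1c.
Qed.

End GlueLemmas.

Unset Implicit Arguments.
Unset Implicit Arguments. Unset Printing Implicit Defensive.

Definition same_edge (T : Type) (x y x' y' : T) :=
  (x = x' /\ y = y') \/ (x = y' /\ y = x').
Arguments same_edge {T}.

Section Build.
Variable L : graph.
Hypothesis symL : symmetric (@adj L).
Hypothesis irrL : irreflexive (@adj L).
Variable r : nat.
Hypothesis Hr : 0 < r.
Variable s : nat -> vtx L.
Variable G : nat -> graph.
Variable f : forall j, vtx (G j) -> nat.
Variable c : forall j, vtx (G j).
Variable m : nat -> nat.
Hypothesis HGsym : forall j, j < r -> symmetric (@adj (G j)).
Hypothesis HGirr : forall j, j < r -> irreflexive (@adj (G j)).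
Hypothesis Hf_inj : forall j, j < r -> injective (f j).
Hypothesis Hf_le : forall j a, j < r -> f j a <= m j.
Hypothesis Hf_c : forall j, j < r -> f j (c j) = m j.
Hypothesis Hf_surj : forall j n, j < r -> n <= m j -> exists a, f j a = n.
Hypothesis Hgr : forall j (a b a' b' : vtx (G j)), j < r -> adj a b -> adj a' b' ->
  absdiff (f j a) (f j b) = absdiff (f j a') (f j b') -> same_edge a b a' b'.
Hypothesis Hcross : forall j (a b : vtx (G j)), j < r -> adj a b -> adj (c j) a != adj (c j) b.
Variable iA : forall j, vtx (G j) -> vtx L.
Variable iB : forall j, vtx (G j) -> vtx L.
Hypothesis HiA_inj : forall j, j < r -> injective (iA j).
Hypothesis HiA_c : forall j, j < r -> iA j (c j) = s j.
Hypothesis HiA_adj : forall j a b, j < r -> adj (iA j a) (iA j b) = adj a b.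
Hypothesis HiB_inj : forall j, 0 < j < r -> injective (iB j).
Hypothesis HiB_c : forall j, 0 < j < r -> iB j (c j) = s j.-1.
Hypothesis HiB_adj : forall j a b, 0 < j < r -> adj (iB j a) (iB j b) = adj a b.
Variable pend : nat -> {set vtx L}.
Hypothesis Hpend : forall j x, x \in pend j -> adj (s j) x.
Variable lev : vtx L -> nat.
Hypothesis Hlev : forall x, lev x < r.
Hypothesis Hlev_p : forall j x, x \in pend j -> lev x = j.
Hypothesis Hlev_A : forall j a, j < r -> lev (iA j a) = j.
Hypothesis Hlev_B : forall j b, 0 < j < r -> b != c j -> lev (iB j b) = j.
Hypothesis Hcover : forall x, (exists j, x \in pend j) \/ (exists j a, j < r /\ x = iA j a)
   \/ (exists j b, [/\ 0 < j < r, b != c j & x = iB j b]).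
Hypothesis Hdisj_pA : forall j a, j < r -> iA j a \notin pend j.
Hypothesis Hdisj_pB : forall j b, 0 < j < r -> b != c j -> iB j b \notin pend j.
Hypothesis Hdisj_AB : forall j a b, 0 < j < r -> b != c j -> iA j a != iB j b.
Hypothesis Hedge : forall x y, adj x y ->
  (exists i, i.+1 < r /\ same_edge x y (s i) (s i.+1)) \/
  (exists j p, p \in pend j /\ same_edge x y p (s j)) \/
  (exists j a b, j < r /\ same_edge x y (iA j a) (iA j b)) \/
  (exists j a b, 0 < j < r /\ same_edge x y (iB j a) (iB j b)).
Hypothesis Hspine : forall i, i.+1 < r -> adj (s i) (s i.+1).

Definition k j := #|pend j|.
Fixpoint N j := if j is j'.+1 then N j' + 2 * m j'.+1 + 1 + k j'.+1 else k 0 + m 0.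

Definition loc_at j x : nat :=
  if x \in pend j then index x (enum (pend j)) else
  match [pick a | iA j a == x] with
  | Some a => if adj (c j) a then k j + f j a else N j - m j + f j a
  | None => match [pick b | (b != c j) && (iB j b == x)] with
           | Some b => if adj (c j) b then N j - m j + f j b else k j + f j b
           | None => 0 end end.
Definition loc x := loc_at (lev x) x.
Definition pidx j x := index x (enum (pend j)).
Definition Phi j y := k j + m j + N j.-1 - y.
Fixpoint lab j x := if j is j'.+1 then (if lev x == j'.+1 then loc x else Phi j'.+1 (lab j' x))
  else loc x.

Lemma lev_s i : i < r -> lev (s i) = i.
Proof. by move=> ir; rewrite -HiA_c // Hlev_A. Qed.

Lemma loc_A j a : j < r -> loc (iA j a) = if adj (c j) a then k j + f j a else N j - m j + f j a.
Proof.
move=> jr; rewrite /loc Hlev_A // /loc_at (negbTE (Hdisj_pA j a jr)).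
case: pickP => [a' /eqP /(HiA_inj j jr) -> //|].
by move/(_ a); rewrite eqxx.
Qed.

Lemma loc_B j b : 0 < j < r -> b != c j ->
  loc (iB j b) = if adj (c j) b then N j - m j + f j b else k j + f j b.
Proof.
move=> jr bc; rewrite /loc Hlev_B // /loc_at (negbTE (Hdisj_pB j b jr bc)).
case: pickP => [a' /eqP E|_].
  by move: (Hdisj_AB j a' b jr bc); rewrite E eqxx.
case: pickP => [b' /andP [_ /eqP /(HiB_inj j jr) -> //]|].
by move/(_ b); rewrite bc eqxx.
Qed.

Lemma loc_p j x : x \in pend j -> loc x = pidx (j) x.
Proof. by move=> xp; rewrite /loc (Hlev_p j x xp) /loc_at xp. Qed.

Lemma lab_lt j x : lev x < j -> lab j x = Phi j (lab j.-1 x).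
Proof. by case: j => //= j H; rewrite ifN // neq_ltn H. Qed.

Lemma lab_eq j x : lev x = j -> lab j x = loc x.
Proof. by case: j => [|j] //= ->; rewrite eqxx. Qed.


Lemma same_edge_sym (T : Type) (x y u v : T) : same_edge x y u v -> same_edge y x u v.
Proof. by rewrite /same_edge; tauto. Qed.
Arguments same_edge_sym {T x y u v}.

Lemma same_edge_trans (T : Type) (x y x' y' u v : T) :
  same_edge x y u v -> same_edge x' y' u v -> same_edge x y x' y'.
Proof. by move=> [[e1 e2]|[e1 e2]] [[e3 e4]|[e3 e4]]; subst; rewrite /same_edge; tauto. Qed.
Arguments same_edge_trans {T x y x' y' u v}.

Lemma lab_A j a : j < r -> lab j (iA j a) = if adj (c j) a then k j + f j a else N j - m j + f j a.
Proof. by move=> jr; rewrite lab_eq ?Hlev_A // loc_A. Qed.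

Lemma N_ge j : k j + m j <= N j.
Proof. by case: j => //= j; lia. Qed.

Lemma lab_s j : j < r -> lab j (s j) = N j.
Proof.
move=> jr; rewrite -(HiA_c j jr) lab_A // (HGirr j jr) Hf_c //.
by have := N_ge j; lia.
Qed.

Lemma lab_B j b : 0 < j < r -> lab j (iB j b) = if adj (c j) b then N j - m j + f j b else k j + f j b.
Proof.
move=> jr; have jr' : j < r by case/andP: jr.
case: (eqVneq b (c j)) => [->|bc].
  have j0 : 0 < j by case/andP: jr.
  rewrite (HGirr j jr') Hf_c // HiB_c // lab_lt ?lev_s; last by lia.
    by rewrite lab_s; [rewrite /Phi; lia | lia].
  lia.
by rewrite lab_eq ?Hlev_B // loc_B.
Qed.

Lemma lev_cases x : x \in pend (lev x) \/ (exists a, x = iA (lev x) a) \/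
  (0 < lev x /\ exists b, b != c (lev x) /\ x = iB (lev x) b).
Proof.
case: (Hcover x) => [[j xp]|[[j [a [jr ->]]]|[j [b [jr bc ->]]]]].
- by left; rewrite (Hlev_p j x xp).
- by right; left; rewrite Hlev_A //; exists a.
- right; right; rewrite Hlev_B //; split; first by case/andP: jr.
  by exists b.
Qed.

Lemma pend_idx j x : x \in pend j -> pidx (j) x < k j.
Proof. by move=> xp; rewrite /k /pidx cardE index_mem mem_enum. Qed.

Lemma pend_idx_inj j x y : x \in pend j -> y \in pend j ->
  pidx (j) x = pidx (j) y -> x = y.
Proof.
move=> xp yp E.
by apply: (@index_inj _ x (enum (pend j))); rewrite ?mem_enum.
Qed.

Lemma pend_surj j n : n < k j -> exists x, x \in pend j /\ pidx (j) x = n.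
Proof.
move=> nk; have nk' : n < size (enum (pend j)) by rewrite -cardE.
exists (nth (s j) (enum (pend j)) n); split.
  by rewrite -mem_enum mem_nth.
by rewrite /pidx index_uniq // enum_uniq.
Qed.

Lemma Phi_absdiff j u v : u <= N j.-1 -> v <= N j.-1 ->
  absdiff (Phi j u) (Phi j v) = absdiff u v.
Proof. by rewrite /Phi /absdiff; lia. Qed.

Lemma f_lt j a : j < r -> a != c j -> f j a < m j.
Proof.
move=> jr ac; have := Hf_le j a jr; rewrite leq_eqVlt => /orP [/eqP E|//].
by move: ac; rewrite -(Hf_c j jr) in E; rewrite (Hf_inj j jr _ _ E) eqxx.
Qed.


Lemma same_edge_lev x y u v j : same_edge x y u v -> lev u < j -> lev v < j -> lev x < j /\ lev y < j.
Proof. by case=> [[-> ->]|[-> ->]]. Qed.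
Arguments same_edge_lev {x y u v j}.

Lemma same_edge_swap (T : Type) (x y u v : T) : same_edge x y u v -> same_edge x y v u.
Proof. by rewrite /same_edge; tauto. Qed.
Arguments same_edge_swap {T x y u v}.

Lemma edge_cls j x y : j < r -> adj x y -> lev x <= j -> lev y <= j ->
  (lev x < j /\ lev y < j)
  \/ (exists p, p \in pend j /\ same_edge x y p (s j))
  \/ (0 < j /\ same_edge x y (s j.-1) (s j))
  \/ (exists a b, adj a b /\ adj (c j) a /\ same_edge x y (iA j a) (iA j b))
  \/ (0 < j /\ exists a b, adj a b /\ adj (c j) a /\ same_edge x y (iB j a) (iB j b)).
Proof.
move=> jr xy lx ly.
case: (Hedge x y xy) => [[i [ir E]]|[[j' [p [pp E]]]|[[j' [a [b [jr' E]]]]|[j' [a [b [jr' E]]]]]]].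
- have li := lev_s i (ltnW ir); have li1 := lev_s i.+1 ir.
  case: (ltnP i.+1 j) => ij.
    by left; apply: (same_edge_lev E); lia.
  have ej : j = i.+1.
    by case: E => [[_ Ey]|[Ex _]]; [move: ly; rewrite Ey li1 | move: lx; rewrite Ex li1]; lia.
  by subst j; right; right; left; split.
- have lp := Hlev_p j' p pp; have jr' : j' < r by rewrite -lp Hlev.
  have ls := lev_s j' jr'.
  case: (ltnP j' j) => ij.
    by left; apply: (same_edge_lev E); lia.
  have ej : j = j'.
    by case: E => [[Ex _]|[_ Ey]]; [move: lx; rewrite Ex lp | move: ly; rewrite Ey lp]; lia.
  by rewrite ej; right; left; exists p; split.
- have la := Hlev_A j' a jr'; have lb := Hlev_A j' b jr'.
  case: (ltnP j' j) => ij.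
    by left; apply: (same_edge_lev E); lia.
  have ej : j = j'.
    by case: E => [[Ex _]|[Ex _]]; move: lx; rewrite Ex ?la ?lb; lia.
  subst j'; right; right; right; left.
  have ab : adj a b.
    by case: E => [[Ex Ey]|[Ex Ey]]; move: xy; rewrite Ex Ey HiA_adj // => H //; rewrite HGsym.
  have := Hcross j a b jr ab.
  case ca: (adj (c j) a) => /= cb.
    by exists a, b.
  exists b, a; split; first by rewrite HGsym.
  by split; [by move: cb; case: (adj (c j) b) | apply: same_edge_swap].
- have j0 : 0 < j' by case/andP: jr'.
  have jr'' : j' < r by case/andP: jr'.
  have lev_iB : forall z, lev (iB j' z) = if z == c j' then j'.-1 else j'.
    move=> z; case: eqP => [->|/eqP zc]; first by rewrite HiB_c // lev_s //; lia.
    by rewrite Hlev_B.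
  case: (ltnP j' j) => ij.
    by left; apply: (same_edge_lev E); rewrite lev_iB; case: (_ == _); lia.
  case: (eqVneq j' j) => [ej|nj].
    subst j'; right; right; right; right; split => //.
    have ab : adj a b.
      by case: E => [[Ex Ey]|[Ex Ey]]; move: xy; rewrite Ex Ey HiB_adj // => H //; rewrite HGsym.
    have := Hcross j a b jr ab.
    case ca: (adj (c j) a) => /= cb.
      by exists a, b.
    exists b, a; split; first by rewrite HGsym.
    by split; [by move: cb; case: (adj (c j) b) | apply: same_edge_swap].
  exfalso.
  have ac : a = c j'.
    apply/eqP; case: E => [[Ex _]|[_ Ey]]; [move: lx; rewrite Ex | move: ly; rewrite Ey];
    rewrite lev_iB; case: ifP => //; lia.
  have bc : b = c j'.
    apply/eqP; case: E => [[_ Ey]|[Ex _]]; [move: ly; rewrite Ey | move: lx; rewrite Ex];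
    rewrite lev_iB; case: ifP => //; lia.
  case: E => [[Ex Ey]|[Ex Ey]]; move: xy; rewrite Ex Ey HiB_adj // ac bc (HGirr j' jr'') //.
Qed.

Lemma vcls x j : lev x = j -> x \in pend j \/ (exists a, x = iA j a) \/
  (0 < j /\ exists b, b != c j /\ x = iB j b).
Proof. by move=> <-; apply: lev_cases. Qed.

Definition Inv j :=
 [/\ (forall x, lev x <= j -> lab j x <= N j),
     (forall x y, lev x <= j -> lev y <= j -> lab j x = lab j y -> x = y),
     (forall x y x' y', lev x <= j -> lev y <= j -> lev x' <= j -> lev y' <= j ->
        adj x y -> adj x' y' ->
        absdiff (lab j x) (lab j y) = absdiff (lab j x') (lab j y') -> same_edge x y x' y')
   & (forall n, n <= N j -> exists x, lev x <= j /\ lab j x = n)].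

Lemma lab0_A a : lab 0 (iA 0 a) = k 0 + f 0 a.
Proof. by rewrite lab_A //=; case: ifP => _; lia. Qed.

Lemma lab_p j x : x \in pend j -> lab j x = pidx (j) x.
Proof. by move=> xp; rewrite lab_eq ?(Hlev_p j x xp) // (loc_p j x xp). Qed.

Lemma lev0 x : lev x <= 0 -> x \in pend 0 \/ exists a, x = iA 0 a.
Proof.
rewrite leqn0 => /eqP /vcls [H|[H|[H _]]] //; by [left|right].
Qed.

Lemma Inv0 : Inv 0.
Proof.
split.
- move=> x /lev0 [xp|[a ->]].
    by rewrite lab_p //; have := pend_idx 0 x xp; rewrite /=; lia.
  by rewrite lab0_A /=; have := Hf_le 0 a Hr; lia.
- move=> x y /lev0 [xp|[a ->]] /lev0 [yp|[b ->]].
  + by rewrite !lab_p //; apply: pend_idx_inj.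
  + by rewrite (lab_p 0 x xp) lab0_A; have := pend_idx 0 x xp; lia.
  + by rewrite (lab_p 0 y yp) lab0_A; have := pend_idx 0 y yp; lia.
  + by rewrite !lab0_A => /addnI /(Hf_inj 0 Hr) ->.
- move=> x y x' y' lx ly lx' ly' xy xy'.
  have lab_e : forall u v, adj u v -> lev u <= 0 -> lev v <= 0 ->
     (exists p, p \in pend 0 /\ same_edge u v p (s 0) /\ absdiff (lab 0 u) (lab 0 v) = N 0 - pidx (0) p)
     \/ (exists a b, adj a b /\ same_edge u v (iA 0 a) (iA 0 b) /\ absdiff (lab 0 u) (lab 0 v) = absdiff (f 0 a) (f 0 b)).
    move=> u v uv lu lv.
    case: (edge_cls 0 u v Hr uv lu lv) => [[]//|[[p [pp E]]|[[]//|[[a [b [ab [_ E]]]]|[[]//]]]]].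
    + left; exists p; split=> //; split=> //.
      have lp := lab_p 0 p pp; have ls := lab_s 0 Hr.
      have := pend_idx 0 p pp; have := N_ge 0.
      case: E => [[-> ->]|[-> ->]]; rewrite lp ls /absdiff; lia.
    + right; exists a, b; split=> //; split=> //.
      case: E => [[-> ->]|[-> ->]]; rewrite !lab0_A /absdiff; lia.
  have bnd : forall a b : vtx (G 0), absdiff (f 0 a) (f 0 b) <= m 0.
    by move=> a b; have := Hf_le 0 a Hr; have := Hf_le 0 b Hr; rewrite /absdiff; lia.
  case: (lab_e x y xy lx ly) => [[p [pp [E L1]]]|[a [b [ab [E L1]]]]];
  case: (lab_e x' y' xy' lx' ly') => [[p' [pp' [E' L2]]]|[a' [b' [ab' [E' L2]]]]]; rewrite L1 L2 => H.
  + have ip := pend_idx 0 p pp; have ip' := pend_idx 0 p' pp'.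
    have ee : p = p' by apply: (pend_idx_inj 0) => //; move: H; rewrite /=; lia.
    by subst p'; apply: (same_edge_trans E E').
  + by have := pend_idx 0 p pp; have := bnd a' b'; move: H; rewrite /=; lia.
  + by have := pend_idx 0 p' pp'; have := bnd a b; move: H; rewrite /=; lia.
  + have := Hgr 0 a b a' b' Hr ab ab' H.
    case=> [[e1 e2]|[e1 e2]]; subst a' b'; apply: (same_edge_trans E) => //.
    by apply: same_edge_swap.
- move=> n nN.
  case: (ltnP n (k 0)) => nk.
    by have [x [xp <-]] := pend_surj 0 n nk; exists x; rewrite (Hlev_p 0 x xp) lab_p.
  have [a fa] : exists a, f 0 a = n - k 0.
    by apply: Hf_surj => //; move: nN; rewrite /=; lia.
  by exists (iA 0 a); rewrite Hlev_A // lab0_A fa; split=> //; lia.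
Qed.

Lemma adj_c_neq j a : j < r -> adj (c j) a -> a != c j.
Proof. by move=> jr ca; apply/eqP=> E; rewrite E (HGirr j jr) in ca. Qed.

Lemma gedge_zero j a b : j < r -> adj a b -> f j a = f j b -> False.
Proof. by move=> jr ab /(Hf_inj j jr) E; rewrite E (HGirr j jr) in ab. Qed.

Lemma gedge_same j a b a' b' : j < r -> adj a b -> adj (c j) a -> adj a' b' -> adj (c j) a' ->
  f j b + f j a' = f j b' + f j a -> a = a' /\ b = b'.
Proof.
move=> jr ab ca ab' ca' E.
have := Hgr j a b a' b' jr ab ab'; rewrite /absdiff; case; first by lia.
- by [].
move=> [e1 e2]; subst a' b'.
by have := Hcross j a b jr ab; rewrite ca ca'.
Qed.

Lemma gedge_opp j a b a' b' : j < r -> adj a b -> adj (c j) a -> adj a' b' -> adj (c j) a' ->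
  f j b + f j b' = f j a' + f j a -> False.
Proof.
move=> jr ab ca ab' ca' E.
have := Hgr j a b a' b' jr ab ab'; rewrite /absdiff; case; first by lia.
- move=> [e1 e2]; subst a' b'; apply: (gedge_zero j a b jr ab); lia.
move=> [e1 e2]; subst a' b'.
by have := Hcross j a b jr ab; rewrite ca ca'.
Qed.

Lemma InvS j' : j'.+1 < r -> Inv j' -> Inv j'.+1.
Proof.
move=> jr [IH1 IH2 IH3 IH4].
have jr' : j' < r by apply: ltnW.
have j0 : 0 < j'.+1 < r by rewrite jr.
have EN : N j'.+1 = N j' + 2 * m j'.+1 + 1 + k j'.+1 by [].
have labO : forall x, lev x <= j' -> lab j'.+1 x = k j'.+1 + m j'.+1 + N j' - lab j' x.
  by move=> x lx; rewrite lab_lt //.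
have fle : forall a, f j'.+1 a <= m j'.+1 by move=> a; apply: Hf_le.
have fltQ : forall a, adj (c j'.+1) a -> f j'.+1 a < m j'.+1.
  by move=> a ca; apply: f_lt => //; apply: adj_c_neq.
have vnf : forall x, lev x <= j'.+1 ->
   (lev x <= j' /\ lab j'.+1 x = k j'.+1 + m j'.+1 + N j' - lab j' x /\ lab j' x <= N j')
   \/ (x \in pend j'.+1 /\ lab j'.+1 x = pidx (j'.+1) x /\ pidx (j'.+1) x < k j'.+1)
   \/ (exists a, x = iA j'.+1 a /\ lab j'.+1 x = if ~~ adj (c j'.+1) a then N j'.+1 - m j'.+1 + f j'.+1 a
          else k j'.+1 + f j'.+1 a)
   \/ (exists b, b != c j'.+1 /\ x = iB j'.+1 b /\ lab j'.+1 x = if adj (c j'.+1) b then N j'.+1 - m j'.+1 + f j'.+1 b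
          else k j'.+1 + f j'.+1 b).
  move=> x; rewrite leq_eqVlt ltnS => /orP [/eqP lx|lx].
    case: (vcls x _ lx) => [xp|[[a ->]|[_ [b [bc ->]]]]].
    - by right; left; rewrite lab_p //; split=> //; split=> //; apply: pend_idx.
    - by right; right; left; exists a; split=> //; rewrite lab_A //; case: ifP.
    - by right; right; right; exists b; split=> //; split=> //; rewrite lab_B.
  by left; split=> //; split; [apply: labO | apply: IH1].
split.
- move=> x /vnf [[_ [-> _]]|[[_ [-> H]]|[[a [_ ->]]|[b [_ [_ ->]]]]]]; try lia.
  + by case: ifP => _; have := fle a; lia.
  + by case: ifP => _; have := fle b; lia.
- move=> x y /vnf Hx /vnf Hy.
  case: Hx => [[lx [Lx bx]]|[[xp [Lx bx]]|[[a [-> Lx]]|[a [ac [-> Lx]]]]]];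
  case: Hy => [[ly [Ly by']]|[[yp [Ly by']]|[[b [-> Ly]]|[b [bc [-> Ly]]]]]];
  rewrite Lx Ly; move: Lx Ly => _ _.
  + move=> H; apply: IH2 => //; lia.
  + lia.
  + have := fle b; case: ifP => [/negbTE cb|/negbFE cb]; try lia.
    have := fltQ b cb; lia.
  + have := fle b; case: ifP => [cb|/negbT cb]; try lia.
    have := f_lt j'.+1 b jr bc; lia.
  + lia.
  + by move=> H; apply: (pend_idx_inj j'.+1).
  + by case: ifP => _; lia.
  + by case: ifP => _; lia.
  + have := fle a; case: ifP => [/negbTE ca|/negbFE ca]; try lia.
    have := fltQ a ca; lia.
  + by case: ifP => _; lia.
  + have := fle a; have := fle b.
    case: ifP => ca; case: ifP => cb; try lia.
    * by move=> _ _ /addnI /(Hf_inj _ jr) ->.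
    * by move=> _ _ /addnI /(Hf_inj _ jr) ->.
  + have := fle a; have := fle b.
    case: ifP => ca; case: ifP => cb; try lia.
    * move=> _ _ /addnI /(Hf_inj _ jr) E; subst b; by move: ca cb; case: (adj (c j'.+1) a).
    * move=> _ _ /addnI /(Hf_inj _ jr) E; subst b; by move: ca cb; case: (adj (c j'.+1) a).
  + have := fle a; case: ifP => [ca|/negbT ca]; try lia.
    have := f_lt j'.+1 a jr ac; lia.
  + by case: ifP => _; lia.
  + have := fle a; have := fle b.
    case: ifP => ca; case: ifP => cb; try lia.
    * move=> _ _ /addnI /(Hf_inj _ jr) E; subst b; by move: ca cb; case: (adj (c j'.+1) a).
    * move=> _ _ /addnI /(Hf_inj _ jr) E; subst b; by move: ca cb; case: (adj (c j'.+1) a).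
  + have := fle a; have := fle b.
    case: ifP => ca; case: ifP => cb; try lia.
    * by move=> _ _ /addnI /(Hf_inj _ jr) ->.
    * by move=> _ _ /addnI /(Hf_inj _ jr) ->.
- have enf : forall u v, adj u v -> lev u <= j'.+1 -> lev v <= j'.+1 ->
   (lev u <= j' /\ lev v <= j' /\ absdiff (lab j'.+1 u) (lab j'.+1 v) = absdiff (lab j' u) (lab j' v)
      /\ absdiff (lab j' u) (lab j' v) <= N j')
   \/ (exists p, p \in pend j'.+1 /\ same_edge u v p (s j'.+1) /\
        absdiff (lab j'.+1 u) (lab j'.+1 v) + pidx (j'.+1) p = N j'.+1 /\
        pidx (j'.+1) p < k j'.+1)
   \/ (same_edge u v (s j') (s j'.+1) /\ absdiff (lab j'.+1 u) (lab j'.+1 v) = N j' + m j'.+1 + 1)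
   \/ (exists a b, adj a b /\ adj (c j'.+1) a /\ same_edge u v (iA j'.+1 a) (iA j'.+1 b) /\
        absdiff (lab j'.+1 u) (lab j'.+1 v) + f j'.+1 a = N j' + m j'.+1 + 1 + f j'.+1 b)
   \/ (exists a b, adj a b /\ adj (c j'.+1) a /\ same_edge u v (iB j'.+1 a) (iB j'.+1 b) /\
        absdiff (lab j'.+1 u) (lab j'.+1 v) + f j'.+1 b = N j' + m j'.+1 + 1 + f j'.+1 a).
    move=> u v uv lu lv.
    case: (edge_cls j'.+1 u v jr uv lu lv) =>
      [[lu' lv']|[[p [pp E]]|[[_ E]|[[a [b [ab [ca E]]]]|[_ [a [b [ab [ca E]]]]]]]]].
    + left; rewrite ltnS in lu' lv'; split=> //; split=> //.
      have := IH1 u lu'; have := IH1 v lv'.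
      by rewrite !labO // /absdiff; lia.
    + right; left; exists p; split=> //; split=> //.
      have ip := pend_idx _ _ pp.
      have := N_ge j'.+1.
      by case: E => [[-> ->]|[-> ->]]; rewrite (lab_p _ p pp) lab_s //; split=> //;
        rewrite /absdiff; lia.
    + right; right; left; split=> //.
      have ls' := lab_s j' jr'.
      have lo := labO (s j') (eq_leq (lev_s j' jr')).
      have := N_ge j'.+1.
      by case: E => [[-> ->]|[-> ->]]; rewrite lo ls' lab_s //= /absdiff; lia.
    + right; right; right; left; exists a, b; split=> //; split=> //; split=> //.
      have cb : ~~ adj (c j'.+1) b.
        by have := Hcross _ a b jr ab; rewrite ca; case: (adj _ b).
      have := fltQ a ca; have := fle b.
      by case: E => [[-> ->]|[-> ->]]; rewrite !lab_A // ca (negbTE cb) /absdiff; lia.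
    + right; right; right; right; exists a, b; split=> //; split=> //; split=> //.
      have cb : ~~ adj (c j'.+1) b.
        by have := Hcross _ a b jr ab; rewrite ca; case: (adj _ b).
      have := fltQ a ca; have := fle b.
      by case: E => [[-> ->]|[-> ->]]; rewrite !lab_B // ca (negbTE cb) /absdiff; lia.
  move=> x y x' y' lx ly lx' ly' xy xy'.
  case: (enf x y xy lx ly) =>
    [[ux [vx [Ex Bx]]]|[[p [pp [E [Ex ip]]]]|[[E Ex]|[[a [b [ab [ca [E Ex]]]]]|[a [b [ab [ca [E Ex]]]]]]]]];
  case: (enf x' y' xy' lx' ly') =>
    [[ux' [vx' [Ex' Bx']]]|[[p' [pp' [E' [Ex' ip']]]]|[[E' Ex']|[[a' [b' [ab' [ca' [E' Ex']]]]]|[a' [b' [ab' [ca' [E' Ex']]]]]]]]];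
  move=> H; try (have := fltQ a ca); try (have := fle b); try (have := fltQ a' ca');
    try (have := fle b'); try lia.
  all: try match goal with |- context [same_edge] => intros; first [ by apply: IH3 => //; lia
     | by (have ee : p = p' by apply: (pend_idx_inj j'.+1) => //; lia); subst p'; apply: (same_edge_trans E E')
     | by apply: (same_edge_trans E E')
     | by exfalso; apply: (gedge_zero _ a' b' jr ab'); lia
     | by exfalso; apply: (gedge_zero _ a b jr ab); lia
     | by have [e1 e2] := gedge_same _ a b a' b' jr ab ca ab' ca' (ltac:(lia));
          subst a' b'; apply: (same_edge_trans E E')
     | by exfalso; apply: (gedge_opp _ a b a' b' jr ab ca ab' ca'); lia
     ] end.
- move=> n nN.
  case: (ltnP n (k j'.+1)) => nk.
    have [x [xp <-]] := pend_surj _ n nk.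
    by exists x; rewrite (Hlev_p _ x xp) lab_p.
  case: (ltnP n (k j'.+1 + m j'.+1)) => nkm.
    have [a fa] : exists a, f j'.+1 a = n - k j'.+1 by apply: Hf_surj => //; lia.
    case ca: (adj (c j'.+1) a).
      by exists (iA j'.+1 a); rewrite Hlev_A // lab_A // ca fa; split=> //; lia.
    have ac : a != c j'.+1.
      by apply/eqP=> E; move: fa; rewrite E Hf_c //; lia.
    by exists (iB j'.+1 a); rewrite Hlev_B // lab_B // ca fa; split=> //; lia.
  case: (leqP n (k j'.+1 + m j'.+1 + N j')) => nkmn.
    have [x [lx Lx]] := IH4 (k j'.+1 + m j'.+1 + N j' - n) (ltac:(lia)).
    by exists x; split; [lia | rewrite labO // Lx; lia].
  have [a fa] : exists a, f j'.+1 a = n - (N j'.+1 - m j'.+1) by apply: Hf_surj => //; lia.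
  case ca: (adj (c j'.+1) a).
    have ac := adj_c_neq _ a jr ca.
    by exists (iB j'.+1 a); rewrite Hlev_B // lab_B // ca fa; split=> //; lia.
  by exists (iA j'.+1 a); rewrite Hlev_A // lab_A // ca fa; split=> //; lia.
Qed.

Lemma Inv_all j : j < r -> Inv j.
Proof.
elim: j => [|j IH] jr; first by apply: Inv0.
by apply: InvS => //; apply: IH; apply: ltnW.
Qed.

Lemma build_graceful : nedges L = #|vtx L| - 1 -> graceful L.
Proof.
move=> HE.
have jr : r.-1 < r by rewrite prednK.
have lv : forall x, lev x <= r.-1 by move=> x; have := Hlev x; lia.
have [I1 I2 I3 I4] := Inv_all r.-1 jr.
have inj : injective (lab r.-1) by move=> x y; apply: I2.
have c1 : #|vtx L| <= (N r.-1).+1.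
  have U : uniq (map (lab r.-1) (enum (vtx L))) by rewrite map_inj_uniq ?enum_uniq.
  have := uniq_leq_size U (s2 := iota 0 (N r.-1).+1).
  rewrite size_map -cardE size_iota; apply=> z /mapP [x _ ->].
  by rewrite mem_iota add0n ltnS I1.
have c2 : (N r.-1).+1 <= #|vtx L|.
  have := uniq_leq_size (iota_uniq 0 (N r.-1).+1) (s2 := map (lab r.-1) (enum (vtx L))).
  rewrite size_map -cardE size_iota; apply=> z; rewrite mem_iota add0n ltnS => zN.
  have [x [_ <-]] := I4 z zN.
  by apply: map_f; rewrite mem_enum.
exists (lab r.-1); split=> //; split.
  by move=> v; rewrite HE; have := I1 v (lv v); lia.
by move=> x y x' y' xy xy' H; apply: I3.
Qed.

End Build.

Unset Implicit Arguments.
Unset Implicit Arguments. Unset Printing Implicit Defensive.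

Definition is_inr (A B : Type) (x : A + B) := if x is inr _ then true else false.
Arguments is_inr {A B}.

Section Concrete.
Variable L : graph.
Variable r : nat.
Variable s : nat -> vtx L.
Variable lobe : vtx L -> nat.
Variable G : nat -> graph.
Variable f : forall i, vtx (G i) -> nat.
Variable c : forall i, vtx (G i).
Hypothesis HL : tree L.
Hypothesis Hr : 0 < r.
Hypothesis Hlobe_lt : forall x, lobe x < r.
Hypothesis Hlobe_s : forall i, i < r -> lobe (s i) = i.
Hypothesis Hsadj : forall i, i.+1 < r -> adj (s i) (s i.+1).
Hypothesis HedgeL : forall x y, adj x y -> lobe x = lobe y \/
         exists i, i.+1 < r /\ ((x = s i /\ y = s i.+1) \/ (x = s i.+1 /\ y = s i)).
Hypothesis Hshape : forall x, let i := lobe x in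
         x = s i \/ adj (s i) x \/
         exists u, [/\ lobe u = i, adj (s i) u, adj u x &
                      forall y, lobe y = i -> adj x y -> y = u].
Hypothesis HG : forall i, i < r ->
         [/\ tree (G i), diameter4 (G i), graceful_labeling (G i) (f i),
             central (G i) (c i) & is_max_label (G i) (f i) (c i)].

Definition Fred i : {set vtx L} := [set x | (lobe x == i) &&
                      ~~ (adj (s i) x &&
                          [forall y, ((lobe y == i) && adj x y) ==> (y == s i)])].
Definition pend i : {set vtx L} := [set x | (lobe x == i) &&
                      (adj (s i) x &&
                          [forall y, ((lobe y == i) && adj x y) ==> (y == s i)])].
Local Notation GV i := (vtx (glue (G i) (G i.+1) (c i) (c i.+1))).

Variable hh : forall i, vtx L -> GV i.
Variable gg : forall i, GV i -> vtx L.
Hypothesis Hgg_in : forall i w, i.+1 < r -> gg i w \in Fred i.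
Hypothesis Hhg : forall i w, i.+1 < r -> hh i (gg i w) = w.
Hypothesis Hgh : forall i x, i.+1 < r -> x \in Fred i -> gg i (hh i x) = x.
Hypothesis Hhadj : forall i x y, i.+1 < r -> x \in Fred i -> y \in Fred i ->
  adj x y = adj (hh i x) (hh i y).
Variable hl : forall i, vtx L -> vtx (G i).
Variable gl : forall i, vtx (G i) -> vtx L.
Hypothesis Hgl_in : forall w, gl r.-1 w \in Fred r.-1.
Hypothesis Hhgl : forall w, hl r.-1 (gl r.-1 w) = w.
Hypothesis Hghl : forall x, x \in Fred r.-1 -> gl r.-1 (hl r.-1 x) = x.
Hypothesis Hhadjl : forall x y, x \in Fred r.-1 -> y \in Fred r.-1 ->
  adj x y = adj (hl r.-1 x) (hl r.-1 y).

Lemma symL : symmetric (@adj L). Proof. by case: HL => [[]]. Qed.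
Lemma irrL : irreflexive (@adj L). Proof. by case: HL => [[]]. Qed.
Lemma Gtree i : i < r -> tree (G i). Proof. by case/HG. Qed.
Lemma Gsym i : i < r -> symmetric (@adj (G i)). Proof. by case/Gtree => [[]]. Qed.
Lemma Girr i : i < r -> irreflexive (@adj (G i)). Proof. by case/Gtree => [[]]. Qed.

Definition m j := nedges (G j).
Definition iA j (a : vtx (G j)) : vtx L :=
  if j.+1 < r then gg j (gin (G j) (G j.+1) (c j) (c j.+1) (inl a)) else gl j a.
Definition iB j : vtx (G j) -> vtx L :=
  match j return vtx (G j) -> vtx L with
  | 0 => fun _ => s 0
  | j'.+1 => fun b => gg j' (gin (G j') (G j'.+1) (c j') (c j'.+1) (inr b)) end.
Definition side_at i x := [&& i.+1 < r, x \in Fred i & is_inr (val (hh i x))].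
Definition lev x := if side_at (lobe x) x then (lobe x).+1 else lobe x.

Lemma Fred_lobe i x : x \in Fred i -> lobe x = i.
Proof. by rewrite inE => /andP [/eqP]. Qed.

Lemma pend_lobe i x : x \in pend i -> lobe x = i.
Proof. by rewrite inE => /andP [/eqP]. Qed.

Lemma pend_Fred i x : x \in pend i -> x \notin Fred i.
Proof. by rewrite !inE => /andP [-> ->]. Qed.

Lemma Fred_or_pend x : x \in Fred (lobe x) \/ x \in pend (lobe x).
Proof. by rewrite !inE eqxx /=; case: (_ && _); [right|left]. Qed.

Lemma s_Fred i : i < r -> s i \in Fred i.
Proof. by move=> ir; rewrite inE Hlobe_s // eqxx irrL. Qed.

Lemma Fred_within i x : x \in Fred i -> x = s i \/ adj (s i) x \/
  exists u, [/\ u \in Fred i, adj (s i) u & adj u x].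
Proof.
move=> xF; have lx := Fred_lobe i x xF.
case: (Hshape x) => /=; rewrite lx; first by left.
case=> [H|[u [lu su ux Hy]]]; first by right; left.
case: (eqVneq x (s i)) => [->|xs]; first by left.
right; right; exists u; split=> //.
case: (Fred_or_pend u); rewrite lu // => up.
move: up; rewrite inE => /and3P [_ _ /forallP /(_ x)].
by rewrite lx eqxx ux /= (negbTE xs).
Qed.

Lemma iA_c i : i < r -> iA i (c i) = s i.
Proof.
move=> ir; have [T D _ C _] := HG i ir.
have sF := s_Fred i ir.
rewrite /iA; case: ifP => ir1.
  have [T' D' _ C' _] := HG i.+1 ir1.
  have irr1 := Girr i ir; have irr2 := Girr i.+1 ir1.
  suff -> : gin (G i) (G i.+1) (c i) (c i.+1) (inl (c i)) = hh i (s i) by rewrite Hgh.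
  symmetry; apply: glue_center => //.
  - exact: lvl2_exists T C D.
  - exact: lvl2_exists T' C' D'.
  move=> w; have xF := Hgg_in i w ir1.
  case: (Fred_within i _ xF) => [E|[E|[u [uF su ux]]]].
  - by left; rewrite -E Hhg.
  - by right; left; rewrite -(Hhg i w ir1) -Hhadj.
  - right; right; exists (hh i u); split; first by rewrite -Hhadj.
    by rewrite -(Hhg i w ir1) -Hhadj.
have ei : i = r.-1 by move: ir ir1; move: (r) => n; lia.
subst i.
suff <- : hl r.-1 (s r.-1) = c r.-1 by rewrite Hghl.
apply: (tree_center T C) => // w.
have xF := Hgl_in w.
case: (Fred_within _ _ xF) => [E|[E|[u [uF su ux]]]].
- by left; rewrite -E Hhgl.
- by right; left; rewrite -(Hhgl w) -Hhadjl.
- right; right; exists (hl r.-1 u); split; first by rewrite -Hhadjl.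
  by rewrite -(Hhgl w) -Hhadjl.
Qed.

Lemma lastr j : j < r -> ~~ (j.+1 < r) -> j = r.-1.
Proof. by move: (r) => n; lia. Qed.

Lemma iA_Fred j a : j < r -> iA j a \in Fred j.
Proof.
move=> jr; rewrite /iA; case: ifP => jr1; first exact: Hgg_in.
by have ej := lastr j jr (negbT jr1); subst j; apply: Hgl_in.
Qed.

Lemma lev_in x i : x \in Fred i -> ~~ side_at i x -> lev x = i.
Proof. by move=> xF ns; rewrite /lev (Fred_lobe i x xF) (negbTE ns). Qed.

Lemma lev_A j a : j < r -> lev (iA j a) = j.
Proof.
move=> jr; apply: lev_in; first exact: iA_Fred.
rewrite /side_at /iA; case: ifP => jr1 //=.
by rewrite Hhg //= !andbF.
Qed.

Lemma lev_B j b : 0 < j < r -> b != c j -> lev (iB j b) = j.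
Proof.
case: j b => [|j] b // /andP [_ jr] bc /=.
have xF := Hgg_in j (gin (G j) (G j.+1) (c j) (c j.+1) (inr b)) jr.
by rewrite /lev (Fred_lobe j _ xF) /side_at jr xF Hhg //= (negbTE bc).
Qed.

Lemma lev_p j x : x \in pend j -> lev x = j.
Proof.
move=> xp; rewrite /lev (pend_lobe j x xp) /side_at.
by rewrite (negbTE (pend_Fred j x xp)) andbF.
Qed.

Lemma lev_lt x : lev x < r.
Proof. by rewrite /lev /side_at; case: ifP => [/and3P [H _ _]|_] //; apply: Hlobe_lt. Qed.

Lemma iA_inj j : j < r -> injective (iA j).
Proof.
move=> jr a b; rewrite /iA; case: ifP => jr1 E.
  by move: (congr1 (hh j) E); rewrite !Hhg // => /gin_eq [].
have ej := lastr j jr (negbT jr1); subst j.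
by rewrite -(Hhgl a) E Hhgl.
Qed.

Lemma iA_adj j a b : j < r -> adj (iA j a) (iA j b) = adj a b.
Proof.
move=> jr; rewrite /iA; case: ifP => jr1.
  rewrite (Hhadj j) ?Hhg ?Hgg_in // adj_gin_inl //; [apply: Girr jr | apply: Girr jr1].
have ej := lastr j jr (negbT jr1); subst j.
by rewrite Hhadjl ?Hgl_in // !Hhgl.
Qed.

Lemma iB_Fred j b : 0 < j < r -> iB j b \in Fred j.-1.
Proof. by case: j b => [|j] b // /andP [_ jr]; apply: Hgg_in. Qed.

Lemma iB_inj j : 0 < j < r -> injective (iB j).
Proof.
case: j => [|j] // /andP [_ jr] a b /= E.
move: (congr1 (hh j) E); rewrite !Hhg // => /gin_eq /=.
by case: eqP => [->|na]; case: eqP => [->|nb] // [].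
Qed.

Lemma iB_c j : 0 < j < r -> iB j (c j) = s j.-1.
Proof.
case: j => [|j] // /andP [_ jr] /=.
by rewrite gin_inr_c -(iA_c j (ltnW jr)) /iA jr.
Qed.

Lemma iB_adj j a b : 0 < j < r -> adj (iB j a) (iB j b) = adj a b.
Proof.
case: j a b => [|j] a b // /andP [_ jr] /=.
rewrite (Hhadj j) ?Hhg ?Hgg_in // adj_gin_inr //; [apply: Girr (ltnW jr) | apply: Girr jr].
Qed.

Lemma cover x : (exists j, x \in pend j) \/ (exists j a, j < r /\ x = iA j a)
   \/ (exists j b, [/\ 0 < j < r, b != c j & x = iB j b]).
Proof.
move: (Fred_or_pend x) (Hlobe_lt x); move: (lobe x) => i [xF|xp] ir; last by left; exists i.
right; case: (boolP (i.+1 < r)) => ir1; last first.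
  have ei := lastr i ir ir1; subst i.
  left; exists r.-1, (hl r.-1 x); split=> //.
  by rewrite /iA ifN // Hghl.
have Ex := Hgh i x ir1 xF.
have Eu := gin_val (G i) (G i.+1) (c i) (c i.+1) (hh i x).
have Pu := valP (hh i x).
move: Eu Pu Ex; case: (val (hh i x)) => [a|b] Eu Pu Ex.
  left; exists i, a; split=> //.
  by rewrite /iA ir1 Eu.
right; exists i.+1, b; split=> //.
  apply/negP=> /eqP E; move: Pu; rewrite E /= eqxx //.
by rewrite /= Eu.
Qed.

Lemma disj_pA j a : j < r -> iA j a \notin pend j.
Proof. by move=> jr; apply/negP=> /pend_Fred; rewrite iA_Fred. Qed.

Lemma disj_pB j b : 0 < j < r -> b != c j -> iB j b \notin pend j.
Proof.
move=> jr bc; apply/negP=> /pend_lobe.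
rewrite (Fred_lobe _ _ (iB_Fred j b jr)); case/andP: jr; move: (j) => n; lia.
Qed.

Lemma disj_AB j a b : 0 < j < r -> b != c j -> iA j a != iB j b.
Proof.
move=> jr bc; apply/negP=> /eqP E.
have jr' : j < r by case/andP: jr.
have := Fred_lobe _ _ (iB_Fred j b jr); rewrite -E (Fred_lobe _ _ (iA_Fred j a jr')).
by case/andP: jr; move: (j) => n; lia.
Qed.

Lemma edges x y : adj x y ->
  (exists i, i.+1 < r /\ same_edge x y (s i) (s i.+1)) \/
  (exists j p, p \in pend j /\ same_edge x y p (s j)) \/
  (exists j a b, j < r /\ same_edge x y (iA j a) (iA j b)) \/
  (exists j a b, 0 < j < r /\ same_edge x y (iB j a) (iB j b)).
Proof.
move=> xy; case: (HedgeL x y xy) => [exy|[i [ir E]]]; last by left; exists i.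
right.
have pendP : forall i u v, u \in pend i -> lobe v = i -> adj u v -> v = s i.
  move=> i' u v; rewrite inE => /and3P [_ _ /forallP H] lv uv.
  by have := H v; rewrite lv eqxx uv /= => /eqP.
case: (Fred_or_pend x) => [xF|xp]; last first.
  by left; exists (lobe x), x; split=> //; left; split=> //; apply: (pendP _ x) => //.
case: (Fred_or_pend y) => [yF|yp]; last first.
  left; exists (lobe y), y; split=> //; right; split=> //.
  by apply: (pendP _ y) => //; rewrite symL.
rewrite -exy in yF.
move: xF yF (Hlobe_lt x); move: (lobe x) => i xF yF ir.
case: (boolP (i.+1 < r)) => ir1; last first.
  have ei := lastr i ir ir1; subst i.
  right; left; exists r.-1, (hl r.-1 x), (hl r.-1 y); split=> //.
  by left; split; rewrite /iA ifN // Hghl.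
have e := Hhadj i x y ir1 xF yF; rewrite xy in e.
have irr1 := Girr i ir; have irr2 := Girr i.+1 ir1.
case: (glue_edge _ _ _ _ _ _ (esym e)) => [[a [b [Ex Ey _]]]|[a [b [Ex Ey _]]]].
  right; left; exists i, a, b; split=> //; left.
  by split; rewrite /iA ir1 ?(esym Ex) ?(esym Ey) Hgh.
right; right; exists i.+1, a, b; split=> //; left.
by split; rewrite /= ?(esym Ex) ?(esym Ey) Hgh.
Qed.

Lemma concrete_graceful : graceful L.
Proof.
have GF : forall j, j < r -> [/\ f j (c j) = m j, #|vtx (G j)| = (m j).+1 &
      forall n, n <= m j -> exists a, f j a = n].
  by move=> j jr; have [T _ Gl _ Mx] := HG j jr; apply: grace_facts.
apply: (build_graceful L r Hr s G f c m).
all: first [ exact: Gsym | exact: Girr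
  | (by move=> j jr; have [_ _ [fi _] _ _] := HG j jr)
  | (by move=> j a jr; have [_ _ [_ [fl _]] _ _] := HG j jr; apply: fl)
  | (by move=> j jr; have [-> _ _] := GF j jr)
  | (by move=> j n jr; have [_ _ H] := GF j jr; apply: H)
  | (by move=> j a b a' b' jr; have [_ _ [_ [_ H]] _ _] := HG j jr; apply: H)
  | (by move=> j a b jr ab; have [T _ _ C _] := HG j jr; apply: (cross T C))
  | exact: iA_inj | exact: iA_c | exact: iA_adj | exact: iB_inj | exact: iB_c | exact: iB_adj
  | exact: lev_lt | exact: lev_p | exact: lev_A | exact: lev_B | exact: cover
  | exact: disj_pA | exact: disj_pB | exact: disj_AB | exact: edges
  | (by case: HL => _ [_ [_ ->]])
  | idtac "UNSOLVED" ].
Qed.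

End Concrete.

Unset Implicit Arguments.
Unset Implicit Arguments. Unset Printing Implicit Defensive.

Lemma iso_ext (L : graph) (S : {set vtx L}) (H : graph) (d : vtx H) :
  isomorphic (induced L S) H ->
  exists hf : vtx L -> vtx H, exists gf : vtx H -> vtx L,
   [/\ (forall w, gf w \in S), (forall w, hf (gf w) = w),
       (forall x, x \in S -> gf (hf x) = x) &
       (forall x y, x \in S -> y \in S -> adj x y = adj (hf x) (hf y))].
Proof.
move=> [h [[g hg gh] Had]].
exists (fun x => if insub x is Some y then h y else d), (fun w => val (g w)); split.
- by move=> w; apply: valP.
- by move=> w; rewrite valK gh.
- by move=> x xS; rewrite insubT /= hg.
- by move=> x y xS yS; rewrite !insubT -Had.
Qed.

Theorem theorem4p5 (L : graph) :
  lobster L -> pairwise_linked L -> graceful L.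
Proof.
move=> [HL _] [r [s [lobe [G [f [c [Hr [_ [Hsadj [Hlt [Hls [Hedge [Hshape [HG HF]]]]]]]]]]]]]].
case: HF => Hiso Hlast.
pose GV i := vtx (glue (G i) (G i.+1) (c i) (c i.+1)).
pose P i (hf : vtx L -> GV i) (gf : GV i -> vtx L) :=
   [/\ (forall w, gf w \in Fred L s lobe i), (forall w, hf (gf w) = w),
       (forall x, x \in Fred L s lobe i -> gf (hf x) = x) &
       (forall x y, x \in Fred L s lobe i -> y \in Fred L s lobe i -> adj x y = adj (hf x) (hf y))].
have fam : forall i, {p : (vtx L -> GV i) * (GV i -> vtx L) | i.+1 < r -> P i p.1 p.2}.
  move=> i; apply: constructive_indefinite_description.
  case: (boolP (i.+1 < r)) => ir.
    have [hf [gf H]] := iso_ext L (Fred L s lobe i) _ (gin _ _ _ _ (inl (c i))) (Hiso i ir).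
    by exists (hf, gf).
  by exists ((fun _ => gin _ _ _ _ (inl (c i))), (fun _ => s 0)).
pose Q i (hf : vtx L -> vtx (G i)) (gf : vtx (G i) -> vtx L) :=
   [/\ (forall w, gf w \in Fred L s lobe i), (forall w, hf (gf w) = w),
       (forall x, x \in Fred L s lobe i -> gf (hf x) = x) &
       (forall x y, x \in Fred L s lobe i -> y \in Fred L s lobe i -> adj x y = adj (hf x) (hf y))].
have famL : forall i, {p : (vtx L -> vtx (G i)) * (vtx (G i) -> vtx L) | i = r.-1 -> Q i p.1 p.2}.
  move=> i; apply: constructive_indefinite_description.
  case: (eqVneq i r.-1) => ir.
    subst i.
    have [hf [gf H]] := iso_ext L (Fred L s lobe r.-1) _ (c r.-1) Hlast.
    by exists (hf, gf).
  by exists ((fun _ => c i), (fun _ => s 0)) => E; rewrite E eqxx in ir.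
pose hh i := (sval (fam i)).1.
pose gg i := (sval (fam i)).2.
pose hl i := (sval (famL i)).1.
pose gl i := (sval (famL i)).2.
have PP : forall i, i.+1 < r -> P i (hh i) (gg i) by move=> i ir; apply: (svalP (fam i)).
have QQ : Q r.-1 (hl r.-1) (gl r.-1) by apply: (svalP (famL r.-1)).
case: QQ => Q1 Q2 Q3 Q4.
apply: (concrete_graceful L r s lobe G f c HL Hr Hlt Hls Hedge Hshape HG hh gg) => //.
all: first [ by move=> i w ir; case: (PP i ir)
  | by move=> i x ir; case: (PP i ir) => _ _ H _; apply: H
  | by move=> i x y ir; case: (PP i ir) => _ _ _ H; apply: H
  | exact: Q1 | exact: Q2 | exact: Q3 | exact: Q4 ].
Qed.
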